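(* Let $\mathcal{M}$ be a matroid of rank $c$ on $[n]$ and order $G(J(\mathcal{M}))$ by the iterated-contraction order $\preceq$ along an ordered basis $(v_1,\ldots,v_c)$ (see context). Let $N\in G(J(\mathcal{M}))$, $N\neq\min G(J(\mathcal{M}))$. Then $$C_N=\begin{cases}J(\mathcal{M}(\gamma_N)^0), & \text{if } i_N=0,\\ J(\mathcal{M}'(\gamma_N)^0), & \text{if } i_N>0,\ \text{where }\mathcal{M}'=\mathcal{M}/\{v_1,\ldots,v_{i_N}\}.\end{cases}$$ Moreover, for any given $N$ one can choose such an ordering with $i_N=0$.
   Context: $R=\mathbb{K}[x_1,\ldots,x_n]$, $\mathbb{K}$ a field. For a matroid $\mathcal{N}$ on $E\subseteq[n]$, $J(\mathcal{N})=\bigcap_{F\in\mathcal{B}(\mathcal{N})}(x_i:i\in F)$, formed in $\mathbb{K}[x_i:i\in E]$ and extended to $R$. $\mathcal{M}/A$ is contraction by an independent set $A$. $G(\cdot)$ is the set of minimal monomial generators. For a monomial $N=\prod x_i^{a_i}$, $\gamma_N(i)=a_i$ and $\operatorname{supp}\gamma_N=\{i:a_i>0\}$. For a matroid $\mathcal{N}$ and $N\in G(J(\mathcal{N}))$ ($\gamma_N$ is then a basic $1$-cover of $\mathcal{N}$), $\mathcal{N}(\gamma_N)$ is the matroid whose bases are the bases $F$ of $\mathcal{N}$ with $\sum_{i\in F}\gamma_N(i)=1$, and $\mathcal{N}(\gamma_N)^0$ is its restriction to the complement of $\operatorname{supp}\gamma_N$. Order: $J_i=J(\mathcal{M}/\{v_1,\ldots,v_i\})$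 for $0\le i\le c$; one has $G(J_c)\subseteq\cdots\subseteq G(J_0)$. Choose any total order on each $G(J_i)-G(J_{i+1})$; for $N\in G(J)$ let $i_N$ be the index with $N\in G(J_i)-G(J_{i+1})$; set $N\prec N'$ iff $i_N>i_{N'}$, or $i_N=i_{N'}$ and $N$ precedes $N'$ in the chosen order. $C_N=(N'\in G(J):N'\prec N):N$. *)

(* Defs.v *)
From HB Require Import structures.
From mathcomp Require Import all_boot all_order all_algebra.
From mathcomp Require Import mpoly.
Set Implicit Arguments. Unset Strict Implicit. Unset Printing Implicit Defensive.
Import GRing.Theory.
Local Open Scope ring_scope.

Record matroid (n : nat) := Matroid {
  mground : {set 'I_n};
  mbases : {set {set 'I_n}};
  mbases_sub : forall F, F \in mbases -> F \subset mground;
  mbases_nonempty : mbases != set0;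
  mbases_exch : forall B1 B2, B1 \in mbases -> B2 \in mbases ->
    forall x, x \in B1 :\: B2 ->
      exists2 y, y \in B2 :\: B1 & (y |: (B1 :\ x)) \in mbases }.

Definition has_rank n (M : matroid n) (c : nat) : Prop :=
  forall F, F \in mbases M -> #|F| = c.

(* ordered basis (v_1,...,v_c), indexed by 'I_c (v_{j+1} = v j) *)
Definition ordered_basis n c (M : matroid n) (v : 'I_c -> 'I_n) : Prop :=
  injective v /\ [set v j | j : 'I_c] \in mbases M.

Definition first_elems n c (v : 'I_c -> 'I_n) (i : nat) : {set 'I_n} :=
  [set v j | j : 'I_c & (j < i)%N].

(* bases of the contraction M/A (A independent) *)
Definition contract_bases n (B : {set {set 'I_n}}) (A : {set 'I_n}) :=
  [set F :\: A | F in B & A \subset F].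

Definition restrict_bases n (B : {set {set 'I_n}}) (S : {set 'I_n}) :=
  let I := [set F :&: S | F in B] in
  [set X in I | [forall Y in I, ~~ (X \proper Y)]].

Section Ideals.
Variables (n : nat) (K : fieldType).
Local Notation P := {mpoly K[n]}.

Definition ideal_gen (S : P -> Prop) (p : P) : Prop :=
  exists rs : seq (P * P),
    (forall q, q \in rs -> S q.2) /\ p = \sum_(q <- rs) q.1 * q.2.

Definition var_ideal (F : {set 'I_n}) : P -> Prop :=
  ideal_gen (fun q => exists2 i, i \in F & q = 'X_i).

Definition Jideal (B : {set {set 'I_n}}) (p : P) : Prop :=
  forall F, F \in B -> var_ideal F p.

Definition colon (I : P -> Prop) (f : P) (p : P) : Prop := I (p * f).

Definition ideal_eq (I1 I2 : P -> Prop) : Prop := forall p, I1 p <-> I2 p.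

Definition min_gen (I : P -> Prop) (N : 'X_{1..n}) : Prop :=
  I 'X_[N] /\
  forall N' : 'X_{1..n}, I 'X_[N'] -> (forall i, (N' i <= N i)%N) -> N' = N.
End Ideals.
Arguments Jideal {n} K B p.

Definition msupp n (N : 'X_{1..n}) : {set 'I_n} := [set i | (0 < N i)%N].

(* bases of N(gamma_N): bases F with sum_{i in F} gamma_N(i) = 1 *)
Definition cover_bases n (B : {set {set 'I_n}}) (N : 'X_{1..n}) :=
  [set F in B | (\sum_(i in F) N i == 1)%N].

Definition cover0_bases n (B : {set {set 'I_n}}) (N : 'X_{1..n}) :=
  restrict_bases (cover_bases B N) (~: msupp N).

Definition Jlevel n (K : fieldType) c (M : matroid n) (v : 'I_c -> 'I_n) (i : nat)
  : {mpoly K[n]} -> Prop :=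
  Jideal K (contract_bases (mbases M) (first_elems v i)).

(* i_N = i  iff  N ∈ G(J_i) − G(J_{i+1})  (0 <= i <= c, with G(J_{c+1}) = ∅) *)
Arguments Jlevel {n} K {c} M v i.
Definition level_of n (K : fieldType) c (M : matroid n) (v : 'I_c -> 'I_n)
  (N : 'X_{1..n}) (i : nat) : Prop :=
  (i <= c)%N /\ min_gen (Jlevel K M v i) N /\
  ((i < c)%N -> ~ min_gen (Jlevel K M v i.+1) N).

(* s lists G(J(M)) in an order ≺ (N ≺ N' iff N occurs before N' in s)
   obtained by ordering blocks by decreasing i_N and each block arbitrarily *)
Arguments level_of {n} K {c} M v N i.
Definition admissible_order n (K : fieldType) c (M : matroid n) (v : 'I_c -> 'I_n)
  (s : seq 'X_{1..n}) : Prop :=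
  uniq s /\
  (forall N, N \in s <-> min_gen (Jideal K (mbases M)) N) /\
  (forall N N' i i', N \in s -> N' \in s ->
     level_of K M v N i -> level_of K M v N' i' -> (i' < i)%N ->
     (index N s < index N' s)%N).

Arguments admissible_order {n} K {c} M v s.
Definition C_ideal n (K : fieldType) (s : seq 'X_{1..n}) (N : 'X_{1..n})
  : {mpoly K[n]} -> Prop :=
  colon (ideal_gen (fun q => exists2 N', (N' \in s) && (index N' s < index N s)%N
                                          & q = 'X_[N'])) 'X_[N].
Arguments C_ideal {n} K s N.

(* Main.v *)
Require Import Defs.
From HB Require Import structures.
From mathcomp Require Import all_boot all_order all_algebra.
From mathcomp Require Import mpoly.
From Stdlib Require Import Classical.
Set Implicit Arguments. Unset Strict Implicit. Unset Printing Implicit Defensive.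
Import GRing.Theory.
Local Open Scope ring_scope.
Section Mono.
Variables (n : nat) (K : fieldType).
Local Notation P := {mpoly K[n]}.

Definition MI (Gp : 'X_{1..n} -> Prop) : P -> Prop :=
  ideal_gen (fun q : P => exists2 g, Gp g & q = 'X_[g]).

Lemma MI_P Gp (p : P) : MI Gp p <->
  (forall m, m \in msupp p -> exists2 g, Gp g & (g <= m)%MM).
Proof.
split.
  case=> rs [Hrs ->]; elim: rs Hrs => [|[q1 q2] rs IH] Hrs m.
    by rewrite big_nil msupp0.
  rewrite big_cons => /msuppD_le; rewrite mem_cat => /orP [|]; last first.
    by apply: IH => q Hq; apply: Hrs; rewrite in_cons Hq orbT.
  have [g Hg ->] := Hrs _ (mem_head _ _).
  rewrite (perm_mem (msuppMX _ _)) => /mapP [m' _ ->].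
  by exists g => //; apply: lem_addr.
move=> H; rewrite (mpolyE p).
have : forall m, m \in msupp p -> exists2 g, Gp g & (g <= m)%MM by [].
elim: (msupp p) => [|m l IH] Hl.
  by exists [::]; split => //; rewrite !big_nil.
have [rs [Hrs Hsum]] : MI Gp (\sum_(m0 <- l) p@_m0 *: 'X_[m0]).
  by apply: IH => m' Hm'; apply: Hl; rewrite in_cons Hm' orbT.
have [g Hg Hle] := Hl m (mem_head _ _).
exists ((p@_m *: 'X_[m - g], 'X_[g]) :: rs); split.
  move=> q; rewrite in_cons => /orP [/eqP -> /=|]; first by exists g.
  exact: Hrs.
by rewrite !big_cons Hsum /= -scalerAl -mpolyXD submK.
Qed.

Lemma ideal_gen_mono (S S' : P -> Prop) :
  (forall q, S q -> S' q) -> forall p, ideal_gen S p -> ideal_gen S' p.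
Proof. by move=> H p [rs [Hrs ->]]; exists rs; split => // q /Hrs /H. Qed.

Definition tr (B : {set {set 'I_n}}) (X : {set 'I_n}) :=
  forall F, F \in B -> exists2 i, i \in F & i \in X.

Lemma var_ideal_P F (p : P) : var_ideal F p <->
  (forall m, m \in msupp p -> exists2 i, i \in F & (0 < m i)%N).
Proof.
have -> : var_ideal F p <-> MI (fun g => exists2 i, i \in F & g = U_(i)%MM) p.
  split; apply: ideal_gen_mono => q.
    by case=> i Hi ->; exists U_(i)%MM => //; exists i.
  by case=> g [i Hi ->] ->; exists i.
rewrite MI_P; split=> H m /H.
  by case=> g [i Hi ->]; rewrite lep1mP -lt0n => Hm; exists i.
by case=> i Hi Hm; exists U_(i)%MM; [exists i | rewrite lep1mP -lt0n].
Qed.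

Lemma Jideal_P B (p : P) : Jideal K B p <->
  (forall m, m \in msupp p -> tr B (Defs.msupp m)).
Proof.
split.
  move=> H m Hm F HF; have /var_ideal_P := H F HF.
  by move=> /(_ m Hm) [i Hi Hmi]; exists i => //; rewrite inE.
move=> H F HF; apply/var_ideal_P => m /H /(_ F HF) [i Hi].
by rewrite inE => Hmi; exists i.
Qed.

Lemma Jideal_X B (N : 'X_{1..n}) : Jideal K B 'X_[N] <-> tr B (Defs.msupp N).
Proof.
rewrite Jideal_P msuppX; split; first by apply; rewrite mem_seq1.
by move=> H m; rewrite mem_seq1 => /eqP ->.
Qed.
End Mono.

Definition mintr n (B : {set {set 'I_n}}) (X : {set 'I_n}) :=
  tr B X /\ forall Y : {set 'I_n}, Y \proper X -> ~ tr B Y.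
Definition zo n (N : 'X_{1..n}) := forall i, (N i <= 1)%N.
Definition mset n (X : {set 'I_n}) : 'X_{1..n} := [multinom (i \in X : nat) | i < n].

Lemma mset_supp n (X : {set 'I_n}) : Defs.msupp (mset X) = X.
Proof. by apply/setP => i; rewrite inE mnmE; case: (i \in X). Qed.

Lemma mset_zo n (X : {set 'I_n}) : zo (mset X).
Proof. by move=> i; rewrite mnmE; case: (i \in X). Qed.

Lemma supp_mset n (N : 'X_{1..n}) : zo N -> mset (Defs.msupp N) = N.
Proof.
move=> H; apply/mnmP => i; rewrite mnmE inE.
by move: (H i); case: (N i) => [|[|]].
Qed.

Lemma min_gen_P (K : fieldType) n B (N : 'X_{1..n}) :
  min_gen (Jideal K B) N <-> zo N /\ mintr B (Defs.msupp N).
Proof.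
split.
  case=> /Jideal_X HN Hmin.
  have Hzo : zo N.
    move=> i; rewrite leqNgt; apply/negP => Hi.
    have := Hmin (N - U_(i))%MM.
    have Hs : Defs.msupp (N - U_(i))%MM = Defs.msupp N.
      apply/setP => j; rewrite !inE mnmBE mnm1E.
      by case: eqP => [<-|_]; [rewrite subn_gt0 Hi (ltn_trans _ Hi) | rewrite subn0].
    move=> /(_ _ _)/wrap[]; first by apply/Jideal_X; rewrite Hs.
      by move=> j; rewrite mnmBE leq_subr.
    move/mnmP/(_ i); rewrite mnmBE mnm1E eqxx => /eqP.
    by rewrite -{2}(subn0 (N i)) eqn_sub2lE ?(ltnW Hi) // (ltn_trans _ Hi).
  split => //; split => // Y HY HtY.
  have := Hmin (mset Y) => /(_ _ _)/wrap[].
  - by apply/Jideal_X; rewrite mset_supp.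
  - move=> i; rewrite mnmE; case HiY: (i \in Y) => //=; move/subsetP: (proper_sub HY) => /(_ i HiY).
    by rewrite inE.
  by move=> E; move: HY; rewrite -E mset_supp properxx.
case=> Hzo [Ht Hmin]; split; first by apply/Jideal_X.
move=> N' /Jideal_X Ht' Hle.
have Hsub : Defs.msupp N' \subset Defs.msupp N.
  by apply/subsetP => i; rewrite !inE => /leq_trans; apply.
have Heq : Defs.msupp N' = Defs.msupp N.
  apply/eqP; rewrite eqEsubset Hsub /=; apply/negPn/negP => Hns.
  by apply: (Hmin _ _ Ht'); rewrite properE Hsub.
apply/mnmP => i; apply/eqP; rewrite eqn_leq Hle /=.
have := Hzo i; have := Heq; move/setP/(_ i); rewrite !inE.
by case: (N i) => [|[|]] //= /esym; case: (N' i).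
Qed.
Local Close Scope ring_scope.
Section Mat.
Variables (n : nat) (M : matroid n).
Local Notation B := (mbases M).

Lemma ext_basis (A V F : {set 'I_n}) : V \in B -> A \subset V -> F \in B ->
  exists2 W, W \in B & (A \subset W) && (W \subset A :|: F).
Proof.
move=> HV HAV HF.
suff H : forall k W, #|W :\: (A :|: F)| <= k -> W \in B -> A \subset W ->
  exists2 W, W \in B & (A \subset W) && (W \subset A :|: F).
  exact: (H _ V (leqnn _)).
elim=> [|k IH] W Hk HW HAW.
  exists W; rewrite // HAW /= -setD_eq0 -cards_eq0 -leqn0 //.
case: (set_0Vmem (W :\: (A :|: F))) => [E|[x Hx]].
  by exists W; rewrite // HAW /= -setD_eq0 E.
have HxWF : x \in W :\: F.
  by move: Hx; rewrite !inE negb_or => /andP [/andP [_ ->] ->].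
have [y Hy HW1] := mbases_exch HW HF HxWF.
apply: (IH (y |: (W :\ x))) => //; last first.
  apply/subsetP => a Ha; rewrite !inE (subsetP HAW _ Ha) andbT.
  apply/orP; right; apply/eqP => E; move: Hx; rewrite !inE -E Ha //.
rewrite -ltnS; apply: leq_trans Hk; apply: proper_card; apply/properP; split.
  apply/subsetP => z; rewrite !inE negb_or => /andP [/andP [HzA HzF]].
  case/orP => [/eqP Ez|/andP [_ ->]]; last by rewrite HzA HzF.
  by move: Hy HzF; rewrite Ez !inE => /andP [_ ->].
have Hxy : (x == y) = false.
  apply/negbTE/eqP => E; move: Hy HxWF; rewrite !inE -E => /andP [_ ->].
  by [].
by exists x => //; rewrite !inE Hxy eqxx /= andbF.
Qed.

Lemma tr_contract (A V X : {set 'I_n}) : V \in B -> A \subset V ->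
  [disjoint X & A] -> (tr (contract_bases B A) X <-> tr B X).
Proof.
move=> HV HAV Hd; split => H F HF.
  have [W HW /andP [HAW HWAF]] := ext_basis HV HAV HF.
  have [|i Hi HiX] := H (W :\: A); first by apply/imsetP; exists W; rewrite ?inE ?HW.
  exists i => //; move: Hi; rewrite inE => /andP [HiA /(subsetP HWAF)].
  by rewrite inE (negbTE HiA).
case/imsetP: HF => F0; rewrite inE => /andP [HF0 _] ->.
have [i Hi HiX] := H F0 HF0; exists i => //.
by rewrite inE Hi (disjointFr Hd HiX).
Qed.

Lemma tr_contractD (A X : {set 'I_n}) :
  tr (contract_bases B A) X -> tr (contract_bases B A) (X :\: A).
Proof.
move=> H F HF; have [i Hi HiX] := H F HF; exists i => //.
case/imsetP: HF Hi => F0 _ ->; rewrite !inE => /andP [-> _].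
by rewrite HiX.
Qed.
End Mat.

Lemma tr_sub n (B0 : {set {set 'I_n}}) (X Y : {set 'I_n}) :
  X \subset Y -> tr B0 X -> tr B0 Y.
Proof. by move=> HXY H F HF; have [i Hi HX] := H F HF; exists i; rewrite // (subsetP HXY). Qed.

Lemma proper_diff n (X A : {set 'I_n}) : ~~ [disjoint X & A] -> X :\: A \proper X.
Proof.
rewrite -setI_eq0 => /set0Pn [x]; rewrite inE => /andP [HxX HxA].
apply/properP; split; first exact: subsetDl.
by exists x => //; rewrite inE HxA.
Qed.

Section Mat2.
Variables (n : nat) (M : matroid n).
Local Notation B := (mbases M).

Lemma mintr_contract (A V X : {set 'I_n}) : V \in B -> A \subset V ->
  (mintr (contract_bases B A) X <-> mintr B X /\ [disjoint X & A]).
Proof.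
move=> HV HAV; split.
  case=> Ht Hmin.
  have Hd : [disjoint X & A].
    apply/negPn/negP => Hnd; apply: (Hmin _ (proper_diff Hnd)).
    exact: tr_contractD.
  split => //; split; first by apply/(tr_contract HV HAV Hd).
  move=> Y HY HtY; apply: (Hmin _ HY).
  have HdY : [disjoint Y & A] := disjointWl (proper_sub HY) Hd.
  by apply/(tr_contract HV HAV HdY).
case=> [[Ht Hmin] Hd]; split; first by apply/(tr_contract HV HAV Hd).
move=> Y HY HtY; apply: (Hmin _ HY).
have HdY : [disjoint Y & A] := disjointWl (proper_sub HY) Hd.
by apply/(tr_contract HV HAV HdY).
Qed.
End Mat2.

Lemma mintr_single n (B0 : {set {set 'I_n}}) (S : {set 'I_n}) c :
  mintr B0 S -> c \in S ->
  exists2 G, G \in B0 & forall y, y \in G -> y \in S -> y = c.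
Proof.
case=> _ Hmin Hc; have := Hmin _ (properD1 Hc) => Hn.
apply: NNPP => Hne; apply: Hn => F HF.
apply: NNPP => Hni; apply: Hne; exists F => // y Hy HyS.
apply: NNPP => Hyc; apply: Hni; exists y => //.
by rewrite !inE HyS andbT; apply/eqP.
Qed.

Lemma ex_mintr n (B0 : {set {set 'I_n}}) (X : {set 'I_n}) :
  tr B0 X -> exists2 Y : {set 'I_n}, Y \subset X & mintr B0 Y.
Proof.
move: {2}#|X| (leqnn #|X|) => k; elim: k X => [|k IH] X Hk Ht.
  by exists X => //; split => // Y HY; have := leq_trans (proper_card HY) Hk.
case: (classic (exists2 Y : {set 'I_n}, Y \proper X & tr B0 Y)) => [[Y HY HtY]|Hno].
  have [Z HZ HmZ] := IH Y (leq_trans (proper_card HY) Hk) HtY.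
  by exists Z => //; apply: subset_trans HZ (proper_sub HY).
exists X => //; split => // Y HY HtY; apply: Hno; by exists Y.
Qed.

Section FE.
Variables (n c : nat) (v : 'I_c -> 'I_n).

Lemma fe_sub i : first_elems v i \subset [set v j | j : 'I_c].
Proof. by apply/subsetP => x /imsetP [j _ ->]; apply: imset_f. Qed.

Lemma fe_mono i j : (i <= j)%N -> first_elems v i \subset first_elems v j.
Proof.
move=> Hij; apply/subsetP => x /imsetP [k]; rewrite inE => Hk ->.
by apply: imset_f; rewrite inE (leq_trans Hk Hij).
Qed.

Lemma fe0 : first_elems v 0 = set0.
Proof. by apply/setP => x; rewrite inE; apply/imsetP => [[j]]; rewrite inE ltn0. Qed.

Lemma fe_all i : (c <= i)%N -> first_elems v i = [set v j | j : 'I_c].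
Proof.
move=> Hi; apply/eqP; rewrite eqEsubset fe_sub /=.
by apply/subsetP => x /imsetP [j _ ->]; apply: imset_f; rewrite inE (leq_trans (ltn_ord j) Hi).
Qed.

Lemma fe_in (i : 'I_c) : v i \in first_elems v i.+1.
Proof. by apply: imset_f; rewrite inE. Qed.

Lemma fe_notin (i : 'I_c) : injective v -> v i \notin first_elems v i.
Proof.
move=> Hinj; apply/imsetP => [[j]]; rewrite inE => Hj /Hinj E.
by move: Hj; rewrite E ltnn.
Qed.

Lemma fe_new (i : 'I_c) x : x \in first_elems v i.+1 -> x \notin first_elems v i -> x = v i.
Proof.
case/imsetP => j; rewrite inE ltnS leq_eqVlt => /orP [/eqP Hj|Hj] ->.
  by have -> : j = i by apply: val_inj.
by move/negP => []; apply: imset_f; rewrite inE.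
Qed.
End FE.

Lemma contract0 n (B0 : {set {set 'I_n}}) : contract_bases B0 set0 = B0.
Proof.
apply/setP => F; apply/imsetP/idP => [[F0]|HF].
  by rewrite inE => /andP [H _] ->; rewrite setD0.
by exists F; rewrite ?setD0 // inE HF sub0set.
Qed.

Lemma ex_level (P : nat -> Prop) (c j : nat) : P j -> (j <= c)%N ->
  exists j', [/\ (j <= j')%N, (j' <= c)%N, P j' & ((j' < c)%N -> ~ P j'.+1)].
Proof.
move=> Hj Hjc; move: {2}(c - j)%N (leqnn (c - j)%N) => k.
elim: k j Hj Hjc => [|k IH] j Hj Hjc Hk.
  exists j; split => // Hlt; move: Hk; rewrite leqn0 subn_eq0 => H.
  by move: (leq_trans Hlt H); rewrite ltnn.
case: (classic ((j < c)%N /\ P j.+1)) => [[Hlt HP]|Hno].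
  have Hk' : (c - j.+1 <= k)%N by rewrite subnS; move: Hk; case: (c - j)%N.
  have [j' [H1 H2 H3 H4]] := IH j.+1 HP Hlt Hk'.
  by exists j'; split => //; apply: ltnW.
by exists j; split => // Hlt HP; apply: Hno.
Qed.
Lemma sum_zo n (N : 'X_{1..n}) (F : {set 'I_n}) : zo N ->
  (\sum_(j in F) N j)%N = #|F :&: Defs.msupp N|.
Proof.
move=> Hzo; rewrite -sum1_card big_mkcond [RHS]big_mkcond /=.
apply: eq_bigr => j _; rewrite !inE; case: (j \in F) => //=.
by move: (Hzo j); case: (N j) => [|[|]].
Qed.

Lemma cover_card n (B0 : {set {set 'I_n}}) (A : {set 'I_n}) (N : 'X_{1..n}) c :
  (forall F, F \in B0 -> #|F| = c) -> zo N ->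
  forall Y, Y \in [set F' :&: ~: Defs.msupp N | F' in cover_bases (contract_bases B0 A) N] ->
  #|Y| = (c - #|A|).-1.
Proof.
move=> Hc Hzo Y /imsetP [F']; rewrite inE => /andP [HF' Hsum] ->.
rewrite sum_zo // in Hsum.
case/imsetP: HF' => F; rewrite inE => /andP [HF HAF] EF; subst F'.
have := cardsID (Defs.msupp N) (F :\: A); rewrite (eqP Hsum) setDE.
rewrite cardsD (setIidPr HAF) (Hc F HF) => <-.
by rewrite add1n.
Qed.

Section Lev.
Variables (K : fieldType) (n c : nat) (M : matroid n) (v : 'I_c -> 'I_n).

Lemma minlev (j : nat) (N : 'X_{1..n}) : ordered_basis M v ->
  (min_gen (Jlevel K M v j) N <->
   [/\ zo N, mintr (mbases M) (Defs.msupp N) & [disjoint Defs.msupp N & first_elems v j]]).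
Proof.
case=> _ HV; rewrite /Jlevel min_gen_P (mintr_contract _ HV (fe_sub v j)).
by split => [[? [? ?]]|[? ? ?]].
Qed.

Lemma lev0 (N : 'X_{1..n}) :
  min_gen (Jlevel K M v 0) N <-> min_gen (Jideal K (mbases M)) N.
Proof. by rewrite /Jlevel fe0 contract0. Qed.

Lemma has_level (j : nat) (N : 'X_{1..n}) : min_gen (Jlevel K M v j) N -> (j <= c)%N ->
  exists2 j', (j <= j')%N & level_of K M v N j'.
Proof.
move=> Hj Hjc.
have [j' [H1 H2 H3 H4]] := @ex_level (fun j => min_gen (Jlevel K M v j) N) c j Hj Hjc.
by exists j'.
Qed.
End Lev.

Section Key.
Variables (K : fieldType) (n c : nat) (M : matroid n) (v : 'I_c -> 'I_n)
  (s : seq 'X_{1..n}).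
Local Notation B := (mbases M).

Lemma level_facts (N : 'X_{1..n}) i : ordered_basis M v -> level_of K M v N i ->
  exists Hi : (i < c)%N,
  [/\ zo N, mintr B (Defs.msupp N), [disjoint Defs.msupp N & first_elems v i]
    & v (Ordinal Hi) \in Defs.msupp N].
Proof.
move=> Hob [Hic [/(minlev K _ _ Hob) [Hzo Hmt Hd] Hnext]].
have Hi : (i < c)%N.
  rewrite ltn_neqAle Hic andbT; apply/eqP => Ei; subst i.
  have [x Hx HxS] := (proj1 Hmt) _ (proj2 Hob).
  by move: (disjointFr Hd HxS); rewrite fe_all // Hx.
exists Hi; split => //.
have Hnd : ~~ [disjoint Defs.msupp N & first_elems v i.+1].
  by apply/negP => Hd'; apply: (Hnext Hi); apply/(minlev K _ _ Hob).
move: Hnd; rewrite -setI_eq0 => /set0Pn [x]; rewrite inE => /andP [HxS HxA].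
have := @fe_new n c v (Ordinal Hi) x HxA; rewrite (disjointFr Hd HxS) => /(_ isT) <-.
exact: HxS.
Qed.


Lemma key1 (N N' m : 'X_{1..n}) i : ordered_basis M v ->
  admissible_order K M v s -> N \in s -> level_of K M v N i ->
  N' \in s -> (index N' s < index N s)%N -> (N' <= N + m)%MM ->
  tr (cover0_bases (contract_bases B (first_elems v i)) N) (Defs.msupp m).
Proof.
move=> Hob [Huniq [Hmem Hord]] HNs HlevN HN's Hidx Hle.
have [Hic [Hzo HmS HdS HviS]] := level_facts Hob HlevN.
set S := Defs.msupp N in HmS HdS HviS *.
set A := first_elems v i in HdS *.
set D := Defs.msupp N'.
have /min_gen_P [Hzo' HmD] : min_gen (Jideal K B) N' by apply/Hmem.
have [j' _ Hlev'] := has_level (proj2 (lev0 K M v N') (proj1 (Hmem N') HN's)) (leq0n c).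
have Hij' : (i <= j')%N.
  rewrite leqNgt; apply/negP => Hlt.
  have := Hord N N' i j' HNs HN's HlevN Hlev' Hlt.
  by rewrite ltnNge (ltnW Hidx).
have HdD : [disjoint D & A].
  case: Hlev' => _ [/(minlev K _ _ Hob) [_ _ Hd] _].
  exact: disjointWr (fe_mono v Hij') Hd.
have HDS : D != S.
  apply/eqP => E; move: Hidx; have -> : N' = N.
    by rewrite -(supp_mset Hzo') -(supp_mset Hzo) -/D -/S E.
  by rewrite ltnn.
move=> F'' /setIdP [/imsetP [F' HF' ->] _].
move: HF'; rewrite inE => /andP [HF'CB Hsum].
rewrite sum_zo // -/S in Hsum.
case/cards1P: Hsum => c0 Hc0.
case/imsetP: HF'CB => F; rewrite inE => /andP [HF HAF] EF; subst F'.
apply: NNPP => Hno.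
have HDF : forall x, x \in F -> x \in D -> x = c0.
  move=> x HxF HxD.
  have HxA : x \notin A by rewrite (disjointFr HdD HxD).
  case HxS: (x \in S).
    by apply/set1P; rewrite -Hc0; move: HxS; rewrite !inE HxF HxA => ->.
  exfalso; apply: Hno; exists x.
    by move: HxS; rewrite !inE HxF HxA => ->.
  move: (mnm_lepP Hle x) HxD HxS; rewrite mnmDE !inE.
  by case: (N x) => //=; case: (m x) => //; case: (N' x).
have [c1 Hc1S Hc1D] : exists2 c1, c1 \in S & c1 \notin D.
  case: (boolP (S \subset D)) => HSD; last by case/subsetPn: HSD => x; exists x.
  case: (eqVproper HSD) => [E|Hp]; first by move: HDS; rewrite E eqxx.
  by case: HmD => _ /(_ _ Hp) [] ; case: HmS.
have [G HG HGS] := mintr_single HmS Hc1S.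
have Hc0in : c0 \in (F :\: A) :&: S by rewrite Hc0 set11.
case/setIP: Hc0in => /setDP [Hc0F Hc0A] Hc0S.
have Hc0D : c0 \in D.
  by have [x HxF HxD] := (proj1 HmD) F HF; rewrite -(HDF x HxF HxD).
have Hc01 : c0 != c1 by apply/eqP => E; move: Hc1D; rewrite -E Hc0D.
have Hc0G : c0 \notin G.
  by apply/negP => H; move: Hc01; rewrite (HGS c0 H Hc0S) eqxx.
have Hx : c0 \in F :\: G by rewrite inE Hc0G Hc0F.
have [y Hy HF1] := mbases_exch HF HG Hx.
case/setDP: Hy => HyG HyF.
have Hyc1 : y = c1.
  have [z Hz HzS] := (proj1 HmS) _ HF1.
  move: Hz; rewrite !inE => /orP [/eqP Ezy|/andP [Hzc0 HzF]].
    by subst z; apply: HGS.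
  have HzA : z \notin A by rewrite (disjointFr HdS HzS).
  have : z \in (F :\: A) :&: S by rewrite inE HzS andbT inE HzA HzF.
  by rewrite Hc0 inE (negbTE Hzc0).
have [w Hw HwD] := (proj1 HmD) _ HF1.
move: Hw; rewrite !inE => /orP [/eqP Ewy|/andP [Hwc0 HwF]].
  by move: Hc1D; rewrite -Hyc1 -Ewy HwD.
by move: Hwc0; rewrite (HDF w HwF HwD) eqxx.
Qed.

Lemma key2 (N m : 'X_{1..n}) i : has_rank M c -> ordered_basis M v ->
  admissible_order K M v s -> N \in s -> level_of K M v N i ->
  tr (cover0_bases (contract_bases B (first_elems v i)) N) (Defs.msupp m) ->
  exists N', ((N' \in s) && (index N' s < index N s)%N) /\ (N' <= N + m)%MM.
Proof.
move=> Hrank Hob [Huniq [Hmem Hord]] HNs HlevN HT.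
have [Hic [Hzo HmS HdS HviS]] := level_facts Hob HlevN.
set S := Defs.msupp N in HmS HdS HviS HT *.
set io := Ordinal Hic in HviS.
set A := first_elems v i in HdS HT *.
set A2 := first_elems v i.+1.
set Z := (Defs.msupp m :|: S) :\: A2.
have HviA : v io \notin A := fe_notin io (proj1 Hob).
have HviA2 : v io \in A2 := fe_in v io.
have HAA2 : A \subset A2 := fe_mono v (leqnSn i).
have HtZ : tr (contract_bases B A2) Z.
  move=> F'' /imsetP [F]; rewrite inE => /andP [HF HA2F] ->.
  apply: NNPP => Hno.
  have HAF : A \subset F := subset_trans HAA2 HA2F.
  have HviF : v io \in F := subsetP HA2F _ HviA2.
  have Hc0 : (F :\: A) :&: S = [set v io].
    apply/setP => x; rewrite in_set1; apply/idP/eqP => [|->]; last first.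
      by rewrite inE HviS andbT inE HviA HviF.
    case/setIP => /setDP [HxF HxA] HxS.
    case HxA2 : (x \in A2); first exact: (@fe_new n c v io x HxA2 HxA).
    exfalso; apply: Hno; exists x; first by rewrite inE HxA2 HxF.
    by rewrite inE HxA2 inE HxS orbT.
  have HI : (F :\: A) :&: ~: S \in
      [set F' :&: ~: S | F' in cover_bases (contract_bases B A) N].
    apply/imsetP; exists (F :\: A) => //; rewrite inE; apply/andP; split.
      by apply/imsetP; exists F => //; rewrite inE HF HAF.
    by rewrite sum_zo // -/S Hc0 cards1.
  have HYR : (F :\: A) :&: ~: S \in cover0_bases (contract_bases B A) N.
    rewrite /cover0_bases /restrict_bases inE -/S HI /=.
    apply/forallP => Y; apply/implyP => HY; apply/negP => Hp.
    have := proper_card Hp.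
    by rewrite (cover_card Hrank Hzo HI) (cover_card Hrank Hzo HY) ltnn.
  have [x Hx Hxm] := HT _ HYR.
  case/setIP: Hx => /setDP [HxF HxA]; rewrite inE => HxS.
  have HxA2 : x \notin A2.
    apply/negP => HxA2; move: HxS; rewrite ((@fe_new n c v io x HxA2 HxA)) HviS.
    by [].
  by apply: Hno; exists x; rewrite in_setD ?in_setU HxA2 ?HxF ?Hxm.
have [D HDZ HmD2] := ex_mintr HtZ.
have [HmD HdD] := (@mintr_contract n M A2 _ D (proj2 Hob) (fe_sub v i.+1)).1 HmD2.
exists (mset D).
have HN's : mset D \in s.
  by apply/Hmem; apply/min_gen_P; rewrite mset_supp; split => //; exact: mset_zo.
have Hlev2 : min_gen (Jlevel K M v i.+1) (mset D).
  by apply/(minlev K _ _ Hob); rewrite mset_supp; split => //; exact: mset_zo.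
have [j' Hj' Hlev'] := has_level Hlev2 Hic.
split; first by rewrite HN's /=; exact: Hord HN's HNs Hlev' HlevN Hj'.
apply/mnm_lepP => x; rewrite mnmE mnmDE; case HxD: (x \in D) => //.
have := subsetP HDZ x HxD; rewrite !inE => /andP [_ /orP [H|H]].
  by rewrite addn_gt0 H orbT.
by rewrite addn_gt0 H.
Qed.
End Key.
Lemma C_ideal_P (K : fieldType) n (s : seq 'X_{1..n}) (N : 'X_{1..n}) (p : {mpoly K[n]}) :
  C_ideal K s N p <-> forall m, m \in msupp p ->
    exists N', ((N' \in s) && (index N' s < index N s)%N) /\ (N' <= N + m)%MM.
Proof.
have -> : C_ideal K s N p <->
   MI (fun N' => (N' \in s) && (index N' s < index N s)%N) (p * 'X_[N]) by [].
rewrite MI_P; split => H m Hm.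
  have [|g Hg Hle] := H (N + m)%MM; last by exists g.
  by rewrite (perm_mem (msuppMX _ _)); apply: map_f.
move: Hm; rewrite (perm_mem (msuppMX _ _)) => /mapP [m' Hm' ->].
by have [N' [H1 H2]] := H m' Hm'; exists N'.
Qed.

Theorem theorem4p13 (K : fieldType) (n c : nat) (M : matroid n) :
  has_rank M c ->
  (forall (v : 'I_c -> 'I_n) (s : seq 'X_{1..n}) (N : 'X_{1..n}) (iN : nat),
     ordered_basis M v ->
     admissible_order K M v s ->
     N \in s ->
     N != head N s ->
     level_of K M v N iN ->
     ideal_eq (C_ideal K s N)
       (if iN == 0%N then Jideal K (cover0_bases (mbases M) N)
        else Jideal K (cover0_bases
                         (contract_bases (mbases M) (first_elems v iN)) N)))
  /\
  (forall N : 'X_{1..n}, min_gen (Jideal K (mbases M)) N ->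
     exists v : 'I_c -> 'I_n, ordered_basis M v /\ level_of K M v N 0).
Proof.
move=> Hrank; split.
  move=> v s N iN Hob Had HNs _ Hlev.
  have -> : (if iN == 0%N then Jideal K (cover0_bases (mbases M) N)
        else Jideal K (cover0_bases
                         (contract_bases (mbases M) (first_elems v iN)) N)) =
     Jideal K (cover0_bases (contract_bases (mbases M) (first_elems v iN)) N).
    by case: eqP => // ->; rewrite fe0 contract0.
  move=> p; rewrite C_ideal_P Jideal_P; split => H m Hm.
    have [N' [/andP [H1 H2] H3]] := H m Hm.
    exact: key1 Hob Had HNs Hlev H1 H2 H3.
  exact: key2 Hrank Hob Had HNs Hlev (H m Hm).
move=> N /min_gen_P [Hzo HmS].
set S := Defs.msupp N in HmS *.
have [F0 HF0] : exists F0, F0 \in mbases M.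
  by case/set0Pn: (mbases_nonempty M) => F0 HF0; exists F0.
have [s0 _ Hs0] := (proj1 HmS) F0 HF0.
have [G HG HGS] := mintr_single HmS Hs0.
have Hs0G : s0 \in G.
  by have [y Hy HyS] := (proj1 HmS) G HG; rewrite -(HGS y Hy HyS).
have HGc : #|G| = c := Hrank G HG.
have Hc : (0 < c)%N by rewrite -HGc card_gt0; apply/set0Pn; exists s0.
set w := s0 :: rem s0 (enum G).
have Hperm : perm_eq (enum G) w by apply: perm_to_rem; rewrite mem_enum.
have Hsize : size w = c by rewrite -(perm_size Hperm) -cardE.
have Huniq : uniq w by rewrite -(perm_uniq Hperm) enum_uniq.
have Hmem : w =i G by move=> x; rewrite -(perm_mem Hperm) mem_enum.
pose v := fun j : 'I_c => nth s0 w j.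
have Hinj : injective v.
  move=> j1 j2 /eqP; rewrite /v nth_uniq ?Hsize ?ltn_ord // => /eqP.
  exact: val_inj.
have HimG : [set v j | j : 'I_c] = G.
  apply/setP => x; apply/imsetP/idP => [[j _ ->]|HxG].
    by rewrite -Hmem /v mem_nth // Hsize ltn_ord.
  have Hx : x \in w by rewrite Hmem.
  have Hix : (index x w < c)%N by rewrite -Hsize index_mem.
  by exists (Ordinal Hix) => //; rewrite /v nth_index.
have Hob : ordered_basis M v by split => //; rewrite HimG.
exists v; split => //; split => //; split.
  by apply/lev0; apply/min_gen_P.
move=> _ /(minlev K _ _ Hob) [_ _ Hd].
have := fe_in v (Ordinal Hc); by rewrite /= (disjointFr Hd).
Qed.
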